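(* Let $n\ge 2$, $\alpha\in[0,\pi/2)$, $A\in\Pi_{s,\alpha}^n$ and $q\in\mathbb{C}$ with $0<|q|\le 1$. Then (a) $\cos(\alpha)\,w_q(A)\le\|\mathcal{R}(A)\|$; (b) $|q|\cos(\alpha)\,w_q(A)\le w_q(\mathcal{R}(A))$.
   Context: For $\alpha\in[0,\pi/2)$, $S_\alpha=\{z\in\mathbb{C}:\operatorname{Re}z>0,\ |\operatorname{Im}z|\le\tan(\alpha)\operatorname{Re}z\}$, and $\Pi_{s,\alpha}^n$ is the set of $n\times n$ complex matrices $A$ whose numerical range $W(A)=\{\langle Ax,x\rangle:\|x\|=1\}$ is contained in $S_\alpha$ (sectorial matrices). $\mathcal{R}(A)=\frac{A+A^*}{2}$. $\|\cdot\|$ is the operator (spectral) norm. For $|q|\le1$, the $q$-numerical radius is $w_q(A)=\sup\{|\langle Ax,y\rangle|:\|x\|=\|y\|=1,\ \langle x,y\rangle=q\}$. *)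

(* Defs.v *)
From HB Require Import structures.
From mathcomp Require Import all_boot all_order all_algebra.
From mathcomp Require Import all_classical all_reals all_analysis.
From mathcomp Require Import complex.
Set Implicit Arguments. Unset Strict Implicit. Unset Printing Implicit Defensive.
Import Order.TTheory GRing.Theory Num.Theory.
Local Open Scope ring_scope.
Local Open Scope classical_set_scope.

Section Defs.
Variable R : realType.
Local Notation C := R[i].

Definition cabs (z : C) : R := Normc.normc z.

Definition cconj (z : C) : C := conjc z.

Definition cinner n (x y : 'cV[C]_n) : C := \sum_(i < n) x i 0 * cconj (y i 0).

Definition vnorm n (x : 'cV[C]_n) : R := Num.sqrt (complex.Re (cinner x x)).

Definition adjmx n (A : 'M[C]_n) : 'M[C]_n := map_mx cconj A^T.

Definition realpart n (A : 'M[C]_n) : 'M[C]_n := (2%:R : C)^-1 *: (A + adjmx A).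

Definition opnorm n (A : 'M[C]_n) : R :=
  sup [set vnorm (A *m x) | x in [set x : 'cV[C]_n | vnorm x = 1]].

Definition numrange n (A : 'M[C]_n) : set C :=
  [set cinner (A *m x) x | x in [set x : 'cV[C]_n | vnorm x = 1]].

Definition sector (alpha : R) : set C :=
  [set z : C | 0 < complex.Re z /\ `|complex.Im z| <= tan alpha * complex.Re z].

Definition sectorial n (alpha : R) (A : 'M[C]_n) : Prop :=
  numrange A `<=` sector alpha.

Definition qnumrad n (q : C) (A : 'M[C]_n) : R :=
  sup [set r : R | exists x y : 'cV[C]_n,
        [/\ vnorm x = 1, vnorm y = 1, cinner x y = q &
             r = cabs (cinner (A *m x) y)]].

End Defs.

(* Main.v *)
Require Import Defs.
From HB Require Import structures.
From mathcomp Require Import all_boot all_order all_algebra.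
From mathcomp Require Import all_classical all_reals all_analysis.
From mathcomp Require Import complex.
From mathcomp Require Import ring lra.
Import Order.TTheory GRing.Theory Num.Theory.
Local Open Scope ring_scope.
Local Open Scope complex_scope.
Local Notation Re := complex.Re.
Local Notation Im := complex.Im.

Section Basic.
Variable R : realType.
Local Notation C := R[i].
Variable n : nat.
Implicit Types x y z : 'cV[C]_n.

Lemma conjD (a b : C) : conjc (a + b) = conjc a + conjc b.
Proof. by case: a b => a1 a2 [b1 b2] /=; rewrite opprD. Qed.
Lemma conjM (a b : C) : conjc (a * b) = conjc a * conjc b.
Proof. by case: a b => a1 a2 [b1 b2] /=; congr Complex; ring. Qed.
Lemma conjK (a : C) : conjc (conjc a) = a.
Proof. by case: a => a1 a2 /=; rewrite opprK. Qed.
Lemma conj0 : conjc (0 : C) = 0.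
Proof. by rewrite /= oppr0. Qed.
Lemma conj_sum (I : finType) (F : I -> C) : conjc (\sum_i F i) = \sum_i conjc (F i).
Proof. by elim/big_ind2: _ => //=; [rewrite oppr0 | move=> a b c d <- <-; rewrite conjD]. Qed.

Lemma cinnerDl x y z : cinner (x + y) z = cinner x z + cinner y z.
Proof. by rewrite /cinner -big_split; apply: eq_bigr => i _; rewrite mxE mulrDl. Qed.

Lemma cinnerZl c x z : cinner (c *: x) z = c * cinner x z.
Proof. by rewrite /cinner mulr_sumr; apply: eq_bigr => i _; rewrite mxE mulrA. Qed.

Lemma cinnerC x y : cinner y x = conjc (cinner x y).
Proof.
rewrite /cinner conj_sum; apply: eq_bigr => i _.
by rewrite /cconj conjM conjK mulrC.
Qed.

Lemma cinner_ge0 x : 0 <= cinner x x.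
Proof. by apply: sumr_ge0 => i _; rewrite /cconj mulcJ_ge0. Qed.

Lemma cinner_adj (M : 'M[C]_n) x y : cinner (adjmx M *m x) y = cinner x (M *m y).
Proof.
rewrite /cinner /adjmx.
under eq_bigr do rewrite mxE big_distrl /=.
under [RHS]eq_bigr do rewrite mxE /cconj conj_sum big_distrr /=.
rewrite exchange_big; apply: eq_bigr => i _; apply: eq_bigr => j _.
by rewrite !mxE /cconj conjM; ring.
Qed.

Lemma realC (z : C) : 0 <= z -> z = (Re z)%:C.
Proof. by move=> h; rewrite RRe_real // ger0_real. Qed.

Lemma mulJ (z : C) : z * conjc z = (cabs z ^+ 2)%:C.
Proof. by rewrite -sqr_normc rmorphXn. Qed.

Lemma ReD (a b : C) : Re (a + b) = Re a + Re b.
Proof. by case: a b => a1 a2 [b1 b2]. Qed.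

Lemma ReM_real (r : R) (w : C) : Re (r%:C * w) = r * Re w.
Proof. by case: w => a b /=; rewrite mul0r subr0. Qed.

Lemma ImM_real (r : R) (w : C) : Im (r%:C * w) = r * Im w.
Proof. by case: w => a b /=; rewrite mul0r addr0. Qed.

Lemma cabs_real (r : R) : cabs r%:C = `|r|.
Proof. by rewrite /cabs /= expr0n /= addr0 sqrtr_sqr. Qed.

Lemma conj_real (r : R) : conjc (r%:C) = r%:C.
Proof. by rewrite /= oppr0. Qed.

Lemma Re_ge0 (z : C) : 0 <= z -> 0 <= Re z.
Proof. by rewrite lecE => /andP[]. Qed.

Lemma vnormE x : (vnorm x)%:C ^+ 2 = cinner x x.
Proof.
rewrite -rmorphXn /vnorm sqr_sqrtr; first exact/esym/realC/cinner_ge0.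
exact/Re_ge0/cinner_ge0.
Qed.

Lemma vnorm_ge0 x : 0 <= vnorm x.
Proof. exact: sqrtr_ge0. Qed.

Lemma vnorm1 x : vnorm x = 1 -> cinner x x = 1.
Proof. by move=> h; rewrite -vnormE h expr1n. Qed.

Lemma cinner1_vnorm x : cinner x x = 1 -> vnorm x = 1.
Proof. by move=> h; rewrite /vnorm h /= sqrtr1. Qed.

Lemma vnorm_sqr x : vnorm x ^+ 2 = Re (cinner x x).
Proof. by rewrite /vnorm sqr_sqrtr //; exact/Re_ge0/cinner_ge0. Qed.


Lemma conjN (a : C) : conjc (- a) = - conjc a.
Proof. by case: a => a1 a2 /=. Qed.

Lemma real_CS (P Q N2 : R) : 0 <= P -> 0 <= Q -> 0 <= N2 ->
  (forall s : R, 0 <= P - 2 * s * N2 + s ^+ 2 * N2 * Q) -> N2 <= P * Q.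
Proof.
move=> P0 Q0 N0 key.
have [Qp|] := ltrP 0 Q.
  have := key Q^-1.
  have -> : P - 2 * Q^-1 * N2 + Q^-1 ^+ 2 * N2 * Q = (P * Q - N2) / Q.
    by field; rewrite gt_eqF.
  by rewrite pmulr_lge0 ?invr_gt0 // subr_ge0.
move=> Qle; have Qe : Q = 0 by apply/le_anti; rewrite Qle Q0.
rewrite Qe mulr0; apply/negP => /negP; rewrite -ltNge => Np.
have := key ((P + 1) / (2 * N2)).
have -> : P - 2 * ((P + 1) / (2 * N2)) * N2 + ((P + 1) / (2 * N2)) ^+ 2 * N2 * Q = -1.
  by rewrite Qe mulr0 addr0; field; rewrite gt_eqF.
by rewrite ler0N1.
Qed.

Lemma CS (f : 'cV[C]_n -> 'cV[C]_n -> C)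
  (fl : forall x y z c, f (x + c *: y) z = f x z + c * f y z)
  (fh : forall x y, f y x = conjc (f x y))
  (fp : forall x, 0 <= f x x) x y :
  cabs (f x y) ^+ 2 <= Re (f x x) * Re (f y y).
Proof.
have fr : forall x y z c, f z (x + c *: y) = f z x + conjc c * f z y.
  by move=> x1 y1 z1 c; rewrite fh fl conjD conjM -!fh.
set b := f x y; set P := Re (f x x); set Q := Re (f y y); set N2 := cabs b ^+ 2.
have hP : f x x = P%:C by exact: realC.
have hQ : f y y = Q%:C by exact: realC.
have hN : N2%:C = b * conjc b by rewrite mulJ.
have P0 : 0 <= P by exact/Re_ge0.
have Q0 : 0 <= Q by exact/Re_ge0.
apply: real_CS => //; first exact: sqr_ge0.
move=> s; have := fp (x + (- (s%:C * b)) *: y).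
suff -> : f (x + (- (s%:C * b)) *: y) (x + (- (s%:C * b)) *: y) =
   P%:C - 2%:R * s%:C * N2%:C + s%:C ^+ 2 * N2%:C * Q%:C.
  have -> : P%:C - 2%:R * s%:C * N2%:C + s%:C ^+ 2 * N2%:C * Q%:C =
     (P - 2 * s * N2 + s ^+ 2 * N2 * Q)%:C
    by rewrite !(rmorphB, rmorphD, rmorphM, rmorphXn, rmorph_nat).
  by rewrite ler0c.
rewrite fl !fr (fh x y) -/b hP hQ conjN conjM conj_real hN.
ring.
Qed.


Lemma cinnerDr x y z (c : C) : cinner z (x + c *: y) = cinner z x + conjc c * cinner z y.
Proof. by rewrite cinnerC cinnerDl cinnerZl conjD conjM -!cinnerC. Qed.

Lemma conj_i : conjc ('i%C : C) = - 'i%C.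
Proof. by apply/eqP; rewrite eq_complex /= oppr0 !eqxx. Qed.

Lemma half_real : ((2 : R)^-1)%:C = (2%:R : C)^-1.
Proof. by rewrite fmorphV rmorph_nat. Qed.

Lemma conj_half : conjc ((2%:R : C)^-1) = (2%:R : C)^-1.
Proof. by rewrite -half_real conj_real. Qed.

Lemma cplxE (a b : R) : a +i* b = a%:C + 'i%C * b%:C.
Proof. by apply/eqP; rewrite eq_complex /= !mul0r !mul1r !subr0 !add0r !addr0 !eqxx. Qed.

Variable A : 'M[C]_n.
Definition Bf x y := cinner (A *m x) y.
Definition hf x y := (2%:R : C)^-1 * (Bf x y + conjc (Bf y x)).
Definition kf x y := (2%:R : C)^-1 * ('i%C * (conjc (Bf y x) - Bf x y)).
Definition Pf (t e : R) x y := t%:C * hf x y + e%:C * kf x y.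

Lemma BlinL x y z (c : C) : Bf (x + c *: y) z = Bf x z + c * Bf y z.
Proof. by rewrite /Bf mulmxDr -scalemxAr cinnerDl cinnerZl. Qed.

Lemma BlinR x y z (c : C) : Bf z (x + c *: y) = Bf z x + conjc c * Bf z y.
Proof. by rewrite /Bf cinnerDr. Qed.

Lemma hf_diag x : hf x x = (Re (Bf x x))%:C.
Proof. by rewrite ReJ_add /hf mulrC. Qed.

Lemma kf_diag x : kf x x = (Im (Bf x x))%:C.
Proof. by rewrite ImJ_sub /kf; ring. Qed.

Lemma Pf_l t e x y z (c : C) : Pf t e (x + c *: y) z = Pf t e x z + c * Pf t e y z.
Proof. by rewrite /Pf /hf /kf !BlinL !BlinR !conjD !conjM !conjK; ring. Qed.

Lemma Pf_h t e x y : Pf t e y x = conjc (Pf t e x y).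
Proof.
rewrite /Pf /hf /kf !conjD !conjM !conjD conjN !conjK conj_half conj_i (conj_real t) (conj_real e).
ring.
Qed.

Lemma Pf_diag t e x : Pf t e x x = (t * Re (Bf x x) + e * Im (Bf x x))%:C.
Proof. by rewrite /Pf hf_diag kf_diag !(rmorphD, rmorphM). Qed.

Lemma rc1 : (1 : R)%:C = 1. Proof. by rewrite rmorph1. Qed.
Lemma rcN (a : R) : (- a)%:C = - a%:C. Proof. by rewrite rmorphN. Qed.
Lemma rcM (a b : R) : (a * b)%:C = a%:C * b%:C. Proof. by rewrite rmorphM. Qed.
Lemma rc2 : (2 : R)%:C = 2. Proof. by rewrite rmorph_nat. Qed.

Lemma Pf_comb t x y :
  (2 * t)%:C * Bf x y = (1 +i* t) * Pf t 1 x y + (1 -i* t) * Pf t (-1) x y.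
Proof.
rewrite (cplxE 1 t) (cplxE 1 (- t)) /Pf /hf /kf !rcN rcM rc1 rc2.
have hJ : ('i%C : C) ^+ 2 = -1 by exact: sqr_i.
move: hJ; set J := 'i%C; clearbody J => hJ.
set b1 := Bf x y; set b2 := conjc (Bf y x).
transitivity (2 * t%:C * ((2%:R)^-1 * (b1 + b2) + J ^+ 2 / 2%:R * (b2 - b1))).
  by rewrite hJ; field.
by ring.
Qed.

Lemma Pf_pos t e z : 0 < t -> `|Im (Bf z z)| <= t * Re (Bf z z) -> (e = 1 \/ e = -1) ->
  0 <= Pf t e z z.
Proof.
move=> t0 hs he; rewrite Pf_diag ler0c.
move: hs; rewrite ler_norml => /andP[h1 h2].
by case: he => ->; lra.
Qed.

Lemma normc_sum3 (a b c d : C) : cabs (a * b + c * d) <= cabs a * cabs b + cabs c * cabs d.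
Proof. by rewrite /cabs -!Normc.normcM; apply: le_normcD. Qed.

Lemma cabs_ge0 (z : C) : 0 <= cabs z.
Proof. by case: z => a b; apply: sqrtr_ge0. Qed.

Lemma key (t : R) x y : 0 < t -> (forall z, `|Im (Bf z z)| <= t * Re (Bf z z)) ->
  cabs (Bf x y) ^+ 2 <= (1 + t ^+ 2) * Re (Bf x x) * Re (Bf y y).
Proof.
move=> t0 hs.
have CSp := CS (Pf t 1) (Pf_l t 1) (Pf_h t 1) (fun z => Pf_pos t 1 z t0 (hs z) (or_introl erefl)) x y.
have CSm := CS (Pf t (-1)) (Pf_l t (-1)) (Pf_h t (-1)) (fun z => Pf_pos t (-1) z t0 (hs z) (or_intror erefl)) x y.
rewrite !Pf_diag /= in CSp CSm.
have := hs x; have := hs y.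
set hx := Re (Bf x x); set kx := Im (Bf x x); set hy := Re (Bf y y); set ky := Im (Bf y y).
rewrite !ler_norml => /andP[hy1 hy2] /andP[hx1 hx2].
have comb := congr1 (@cabs R) (Pf_comb t x y).
have := normc_sum3 (1 +i* t) (Pf t 1 x y) (1 -i* t) (Pf t (-1) x y).
rewrite -comb /cabs Normc.normcM -/(cabs _) cabs_real.
rewrite /Normc.normc expr1n sqrrN -!/(cabs _).
set u := cabs (Pf t 1 x y); set v := cabs (Pf t (-1) x y); set N := cabs (Bf x y).
set sq := Num.sqrt (1 + t ^+ 2).
have sq2 : sq ^+ 2 = 1 + t ^+ 2 by rewrite sqr_sqrtr // addr_ge0 // sqr_ge0.
have sq0 : 0 <= sq by apply: sqrtr_ge0.
have u0 : 0 <= u by apply: cabs_ge0.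
have v0 : 0 <= v by apply: cabs_ge0.
have N0 : 0 <= N by apply: cabs_ge0.
move=> H.
have tri : `|2 * t| * N <= sq * u + sq * v := H.
change (N ^+ 2 <= (1 + t ^+ 2) * hx * hy).
rewrite ger0_norm in tri; last by rewrite mulr_ge0 // ltW.
have Cp : u ^+ 2 <= (t * hx + 1 * kx) * (t * hy + 1 * ky) := CSp.
have Cm : v ^+ 2 <= (t * hx + -1 * kx) * (t * hy + -1 * ky) := CSm.
rewrite !mul1r !mulN1r in Cp Cm.
set ap := t * hx + kx in Cp; set am := t * hx - kx in Cm.
set bp := t * hy + ky in Cp; set bm := t * hy - ky in Cm.
have ap0 : 0 <= ap by rewrite /ap; lra.
have am0 : 0 <= am by rewrite /am; lra.
have bp0 : 0 <= bp by rewrite /bp; lra.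
have bm0 : 0 <= bm by rewrite /bm; lra.
have u2 : 0 <= u ^+ 2 by apply: sqr_ge0.
have v2 : 0 <= v ^+ 2 by apply: sqr_ge0.
have s1 : (2 * u * v) ^+ 2 <= (ap * bm + am * bp) ^+ 2.
  have e1 : (2 * u * v) ^+ 2 = 4 * (u ^+ 2 * v ^+ 2) by ring.
  have e2 : u ^+ 2 * v ^+ 2 <= (ap * bp) * (am * bm).
    by apply: ler_pM => //; apply: mulr_ge0.
  have e3 : 4 * ((ap * bp) * (am * bm)) <= (ap * bm + am * bp) ^+ 2.
    have : 0 <= (ap * bm - am * bp) ^+ 2 by apply: sqr_ge0.
    have -> : (ap * bm + am * bp) ^+ 2 = (ap * bm - am * bp) ^+ 2 + 4 * ((ap * bp) * (am * bm)) by ring.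
    lra.
  rewrite e1; lra.
have X0 : 0 <= ap * bm + am * bp by rewrite addr_ge0 // mulr_ge0.
have s2 : 2 * u * v <= ap * bm + am * bp.
  rewrite -(ler_pXn2r (n := 2)) // ?nnegrE //; rewrite !mulr_ge0 //.
have s3 : (u + v) ^+ 2 <= (2 * t * hx) * (2 * t * hy).
  have -> : (2 * t * hx) * (2 * t * hy) = (ap + am) * (bp + bm) by rewrite /ap /am /bp /bm; ring.
  have -> : (u + v) ^+ 2 = u ^+ 2 + v ^+ 2 + 2 * u * v by ring.
  have -> : (ap + am) * (bp + bm) = ap * bp + am * bm + (ap * bm + am * bp) by ring.
  lra.
have s4 : (2 * t * N) ^+ 2 <= sq ^+ 2 * (u + v) ^+ 2.
  rewrite -exprMn; apply: lerXn2r; rewrite ?nnegrE.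
  - by rewrite !mulr_ge0 // ltW.
  - by rewrite mulr_ge0 // addr_ge0.
  - by rewrite mulrDr.
rewrite sq2 in s4.
have t2 : 0 < 4 * t ^+ 2 by rewrite mulr_gt0 // exprn_gt0.
rewrite -(ler_pM2l t2).
have -> : 4 * t ^+ 2 * N ^+ 2 = (2 * t * N) ^+ 2 by ring.
apply: (le_trans s4).
have -> : 4 * t ^+ 2 * ((1 + t ^+ 2) * hx * hy) = (1 + t ^+ 2) * ((2 * t * hx) * (2 * t * hy)) by ring.
by apply: ler_wpM2l => //; rewrite addr_ge0 // sqr_ge0.
Qed.


End Basic.

Arguments conjD {R}. Arguments conjM {R}. Arguments conjK {R}. Arguments conjN {R}.
Arguments cinnerDl {R n}. Arguments cinnerZl {R n}. Arguments cinnerC {R n}.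
Arguments cinner_ge0 {R n}. Arguments cinner_adj {R n}. Arguments cinnerDr {R n}.
Arguments realC {R}. Arguments mulJ {R}. Arguments ReD {R}. Arguments ReM_real {R}.
Arguments ImM_real {R}. Arguments cabs_real {R}. Arguments conj_real {R}.
Arguments Re_ge0 {R}. Arguments vnormE {R n}. Arguments vnorm_ge0 {R n}.
Arguments vnorm1 {R n}. Arguments cinner1_vnorm {R n}. Arguments vnorm_sqr {R n}.
Arguments real_CS {R}. Arguments CS {R n}. Arguments Bf {R n}. Arguments hf {R n}.
Arguments BlinL {R n}. Arguments BlinR {R n}. Arguments hf_diag {R n}.
Arguments rcM {R}. Arguments rcN {R}. Arguments cabs_ge0 {R}. Arguments key {R n}.
Arguments conj_half {R}. Arguments half_real {R}.

Section Part2.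
Variable R : realType.
Local Notation C := R[i].
Variable n : nat.
Implicit Types x y z : 'cV[C]_n.

Lemma cinnerZr x y (c : C) : cinner x (c *: y) = conjc c * cinner x y.
Proof. by rewrite cinnerC cinnerZl conjM -cinnerC. Qed.

Lemma CS_cinner x y : cabs (cinner x y) ^+ 2 <= Re (cinner x x) * Re (cinner y y).
Proof.
apply: (CS (@cinner R n)); last exact: cinner_ge0.
- by move=> a b c d; rewrite cinnerDl cinnerZl.
- by move=> a b; rewrite cinnerC.
Qed.

Lemma sect_all (alpha : R) (A : 'M[C]_n) : sectorial alpha A ->
  forall z, 0 <= Re (Bf A z z) /\ `|Im (Bf A z z)| <= tan alpha * Re (Bf A z z).
Proof.
move=> hA z.
have c0 := cinner_ge0 z.
have r0 := Re_ge0 _ c0.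
have hc := realC _ c0.
set r := Re (cinner z z) in r0 hc.
case: (ltrP 0 r) => rp; last first.
  have re : r = 0 by apply/le_anti; rewrite rp r0.
  have := CS_cinner (A *m z) z; rewrite -/r re mulr0.
  move=> h; have : cabs (Bf A z z) = 0.
    apply/le_anti; rewrite cabs_ge0 andbT.
    by rewrite -(ler_pXn2r (n := 2)) ?nnegrE ?cabs_ge0 // expr0n.
  move=> /Normc.eq0_normc ->; by rewrite /= normr0 mulr0.
set s := (Num.sqrt r)^-1.
have sp : 0 < s by rewrite invr_gt0 sqrtr_gt0.
set w := s%:C *: z.
have ww : cinner w w = 1.
  rewrite /w cinnerZl cinnerZr conj_real hc.
  have -> : s%:C * (s%:C * r%:C) = (s * (s * r))%:C by rewrite !rcM.
  have -> : s * (s * r) = 1.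
    by rewrite /s mulrA -expr2 exprVn sqr_sqrtr ?mulVf // ?gt_eqF // ltW.
  by rewrite rc1.
have hw : Bf A w w = (s * s)%:C * Bf A z z.
  by rewrite /Bf /w -scalemxAr cinnerZl cinnerZr conj_real rcM mulrA [_ * s%:C]mulrC.
have := hA (Bf A w w); case.
  by exists w => //; apply: cinner1_vnorm.
rewrite hw ReM_real ImM_real => h1 h2.
have ss : 0 < s * s by rewrite mulr_gt0.
split; first by move: h1; rewrite pmulr_rgt0 // => /ltW.
move: h2; rewrite normrM (gtr0_norm ss) mulrCA ler_pM2l //.
Qed.


Lemma lim_lemma (b X : R) : 0 <= X -> (forall t, 0 < t -> b <= (1 + t ^+ 2) * X) -> b <= X.
Proof.
move=> X0 h; rewrite leNgt; apply/negP => bX.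
set d := b - X.
have dp : 0 < d by rewrite /d subr_gt0.
have X1 : 0 < 2 * (X + 1) by rewrite mulr_gt0 //; lra.
set t := Num.sqrt (d / (2 * (X + 1))).
have tp : 0 < t by rewrite sqrtr_gt0 divr_gt0.
have := h t tp; rewrite sqr_sqrtr; last by rewrite ltW // divr_gt0.
have e : (1 + d / (2 * (X + 1))) * X = X + d * (X / (2 * (X + 1))).
  by field; rewrite gt_eqF //; lra.
rewrite e.
have q : X / (2 * (X + 1)) < 1 by rewrite ltr_pdivrMr //; lra.
set Y := X / (2 * (X + 1)) in q *.
have : d * Y < d by rewrite gtr_pMr.
rewrite /d; lra.
Qed.

Lemma cos_bound (alpha : R) (A : 'M[C]_n) x y : 0 <= alpha -> alpha < pi / 2 ->
  sectorial alpha A ->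
  (cos alpha * cabs (Bf A x y)) ^+ 2 <= Re (Bf A x x) * Re (Bf A y y).
Proof.
move=> a0 a1 hA.
have hs := @sect_all alpha A hA.
have pi2 : 0 < pi / 2 :> R by rewrite divr_gt0 // pi_gt0.
have c0 : 0 < cos alpha.
  by apply: cos_gt0_pihalf; rewrite a1 andbT; apply: (lt_le_trans _ a0); rewrite oppr_lt0.
have hx0 := (hs x).1; have hy0 := (hs y).1.
rewrite exprMn.
have c2 : 0 < cos alpha ^+ 2 by rewrite exprn_gt0.
case: (ltrP 0 (tan alpha)) => tp.
  have := key A (tan alpha) x y tp (fun z => (hs z).2).
  rewrite -cos2_tan2 ?gt_eqF // => h.
  apply: le_trans (ler_wpM2l (ltW c2) h) _.
  by rewrite !mulrA mulfV ?gt_eqF // mul1r.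
have h : cabs (Bf A x y) ^+ 2 <= Re (Bf A x x) * Re (Bf A y y).
  apply: lim_lemma; first exact: mulr_ge0.
  move=> t t0; rewrite mulrA; apply: key => // z.
  apply: le_trans (hs z).2 _; apply: ler_wpM2r; first exact: (hs z).1.
  exact: le_trans tp (ltW t0).
apply: le_trans h; rewrite ler_piMl ?sqr_ge0 // cos2sin2 lerBlDr lerDl sqr_ge0.
Qed.

End Part2.
Arguments CS_cinner {R n}. Arguments cinnerZr {R n}. Arguments sect_all {R n}.
Arguments cos_bound {R n}. Arguments lim_lemma {R}.

Section Part3.
Variable R : realType.
Local Notation C := R[i].
Variable n : nat.
Implicit Types x y z : 'cV[C]_n.

Lemma cinnerZr' x y (c : C) : cinner x (c *: y) = conjc c * cinner x y.
Proof. by rewrite cinnerC cinnerZl conjM -cinnerC. Qed.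

Lemma realpart_link (A : 'M[C]_n) x y : cinner (realpart A *m x) y = hf A x y.
Proof.
rewrite /realpart -scalemxAl mulmxDl cinnerZl cinnerDl cinner_adj /hf /Bf.
by rewrite [cinner x _]cinnerC.
Qed.

Lemma Re_le_cabs (z : C) : Re z <= cabs z.
Proof.
rewrite /cabs; case: z => a b /=; apply: le_trans (ler_norm a) _.
by rewrite -sqrtr_sqr ler_wsqrtr // lerDl sqr_ge0.
Qed.

Lemma cabs_le_vnorm u y : vnorm y = 1 -> cabs (cinner u y) <= vnorm u.
Proof.
move=> hy; have := CS_cinner u y.
rewrite -vnorm_sqr -vnorm_sqr hy expr1n mulr1 => h.
by rewrite -(ler_pXn2r (n := 2)) ?nnegrE ?cabs_ge0 ?vnorm_ge0.
Qed.

Definition Kb (M : 'M[C]_n) : R := Num.sqrt (Re (\sum_i (\sum_j `|M i j|) ^+ 2)).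

Lemma coord_le1 x j : vnorm x = 1 -> `|x j 0| <= 1.
Proof.
move=> hx; have h1 := vnorm1 _ hx.
rewrite -(expr_le1 (n := 2)) //.
rewrite sqr_normc -h1 /cinner (bigD1 j) //= lerDl.
by apply: sumr_ge0 => i _; rewrite /cconj mulcJ_ge0.
Qed.

Lemma Mbound (M : 'M[C]_n) x : vnorm x = 1 -> vnorm (M *m x) <= Kb M.
Proof.
move=> hx; rewrite /vnorm /Kb; apply: ler_wsqrtr.
suff h : cinner (M *m x) (M *m x) <= \sum_i (\sum_j `|M i j|) ^+ 2.
  by move: h; rewrite lecE => /andP[].
rewrite /cinner; apply: ler_sum => i _.
rewrite /cconj -sqr_normc; apply: lerXn2r; rewrite ?nnegrE ?sumr_ge0 //.
rewrite mxE; apply: le_trans (ler_norm_sum _ _ _) _.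
apply: ler_sum => j _; rewrite normrM ler_piMr //.
exact: coord_le1.
Qed.

Lemma sup_ge0' (E : set R) : (forall r, E r -> 0 <= r) -> has_ubound E -> 0 <= sup E.
Proof.
move=> h hub; have [->|ne] := eqVneq E set0; first by rewrite sup0.
case/set0P: ne => r Er.
exact: le_trans (h r Er) (ub_le_sup hub Er).
Qed.

Lemma sup_scale (E : set R) (c b : R) : 0 < c -> (E !=set0)%classic ->
  (forall r, E r -> c * r <= b) -> c * sup E <= b.
Proof.
move=> c0 ne h.
have : sup E <= c^-1 * b.
  apply: ge_sup => // r Er.
  rewrite -[r](mulKf (lt0r_neq0 c0)); apply: ler_wpM2l; first by rewrite invr_ge0 ltW.
  exact: h.
move=> h2; apply: le_trans (ler_wpM2l (ltW c0) h2) _.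
by rewrite mulrA mulfV ?gt_eqF // mul1r.
Qed.

End Part3.
Arguments cinnerZr' {R n}. Arguments realpart_link {R n}. Arguments Re_le_cabs {R}.
Arguments cabs_le_vnorm {R n}. Arguments Kb {R n}. Arguments Mbound {R n}.
Arguments sup_ge0' {R}. Arguments sup_scale {R}.

Section Part4.
Variable R : realType.
Local Notation C := R[i].
Variable n : nat.
Implicit Types x y z : 'cV[C]_n.

Lemma cabsM (a b : C) : cabs (a * b) = cabs a * cabs b.
Proof. exact: Normc.normcM. Qed.

Lemma conj2 : conjc (2%:R : C) = 2%:R.
Proof. by rewrite -rc2 conj_real. Qed.

Lemma conjN1 : conjc (-1 : C) = -1.
Proof. by rewrite conjN -rc1 conj_real rc1. Qed.

Lemma cabs2 : cabs (2%:R : C) = 2.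
Proof. by rewrite -rc2 cabs_real ger0_norm. Qed.

Lemma sqr_le_nonneg (a b : R) : 0 <= a -> 0 <= b -> a ^+ 2 <= b ^+ 2 -> a <= b.
Proof. by move=> a0 b0 h; rewrite -(ler_pXn2r (n := 2)) ?nnegrE. Qed.

Lemma pair_b (alpha : R) (A : 'M[C]_n) (q : C) x y :
  0 <= alpha -> alpha < pi / 2 -> sectorial alpha A ->
  vnorm x = 1 -> vnorm y = 1 -> cinner x y = q ->
  exists x' y', [/\ vnorm x' = 1, vnorm y' = 1, cinner x' y' = q &
    cabs q * cos alpha * cabs (Bf A x y) <= cabs (cinner (realpart A *m x') y')].
Proof.
move=> a0 a1 hA hx hy hq.
have xx := vnorm1 _ hx; have yy := vnorm1 _ hy.
have yx : cinner y x = conjc q by rewrite cinnerC hq.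
have cb := cos_bound alpha A x y a0 a1 hA.
have hs := sect_all alpha A hA.
have hx0 := (hs x).1; have hy0 := (hs y).1.
have Gxx : cinner (realpart A *m x) x = (Re (Bf A x x))%:C by rewrite realpart_link hf_diag.
have Gyy : cinner (realpart A *m y) y = (Re (Bf A y y))%:C by rewrite realpart_link hf_diag.
have pi2 : 0 < pi / 2 :> R by rewrite divr_gt0 // pi_gt0.
have c0 : 0 < cos alpha.
  by apply: cos_gt0_pihalf; rewrite a1 andbT; apply: (lt_le_trans _ a0); rewrite oppr_lt0.
have q0 := cabs_ge0 q.
have N0 := cabs_ge0 (Bf A x y).
have cN0 : 0 <= cos alpha * cabs (Bf A x y) by rewrite mulr_ge0 // ltW.
move: cb Gxx Gyy hx0 hy0 cN0.
set Hx := Re (Bf A x x); set Hy := Re (Bf A y y); set N := cabs (Bf A x y).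
set Hm := realpart A.
move=> cb Gxx Gyy hx0 hy0 cN0.
case: (lerP Hy Hx) => hxy.
- have t1 : cos alpha * N <= Hx.
    apply: sqr_le_nonneg => //; apply: le_trans cb _.
    by rewrite expr2 ler_wpM2l.
  set v := (2%:R * conjc q) *: x + (-1) *: y.
  have vx : cinner x v = q.
    rewrite /v cinnerDr cinnerZr' xx conjM conj2 conjK conjN1 hq; ring.
  have vv : cinner v v = 1.
    rewrite /v cinnerDl !cinnerZl !cinnerDr !cinnerZr' xx yy hq yx.
    rewrite !conjM conj2 conjK conjN1; ring.
  have Gs : cinner (Hm *m x) y + cinner (Hm *m x) v = 2%:R * q * Hx%:C.
    rewrite /v cinnerDr cinnerZr' Gxx conjM conj2 conjK conjN1; ring.
  have tri : 2 * cabs q * Hx <= cabs (cinner (Hm *m x) y) + cabs (cinner (Hm *m x) v).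
    have := le_normcD (cinner (Hm *m x) y) (cinner (Hm *m x) v).
    by rewrite -/(cabs _) Gs !cabsM cabs2 cabs_real ger0_norm.
  have t2 : cabs q * (cos alpha * N) <= cabs q * Hx by rewrite ler_wpM2l.
  case: (lerP (cabs q * Hx) (cabs (cinner (Hm *m x) y))) => h.
    exists x, y; split => //; rewrite -mulrA; exact: le_trans t2 h.
  exists x, v; split => //; first exact: cinner1_vnorm.
  rewrite -mulrA; lra.
- have t1 : cos alpha * N <= Hy.
    apply: sqr_le_nonneg => //; apply: le_trans cb _.
    by rewrite expr2 ler_wpM2r // ltW.
  set u := (2%:R * q) *: y + (-1) *: x.
  have uy : cinner u y = q.
    rewrite /u cinnerDl !cinnerZl yy hq; ring.
  have uu : cinner u u = 1.
    rewrite /u cinnerDl !cinnerZl !cinnerDr !cinnerZr' xx yy hq yx.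
    rewrite !conjM conj2 conjN1; ring.
  have Gs : cinner (Hm *m x) y + cinner (Hm *m u) y = 2%:R * q * Hy%:C.
    rewrite /u mulmxDr -!scalemxAr cinnerDl !cinnerZl Gyy; ring.
  have tri : 2 * cabs q * Hy <= cabs (cinner (Hm *m x) y) + cabs (cinner (Hm *m u) y).
    have := le_normcD (cinner (Hm *m x) y) (cinner (Hm *m u) y).
    by rewrite -/(cabs _) Gs !cabsM cabs2 cabs_real ger0_norm.
  have t2 : cabs q * (cos alpha * N) <= cabs q * Hy by rewrite ler_wpM2l.
  case: (lerP (cabs q * Hy) (cabs (cinner (Hm *m x) y))) => h.
    exists x, y; split => //; rewrite -mulrA; exact: le_trans t2 h.
  exists u, y; split => //; first exact: cinner1_vnorm.
  rewrite -mulrA; lra.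
Qed.

End Part4.
Arguments cabsM {R}. Arguments sqr_le_nonneg {R}. Arguments pair_b {R n}.

Section Part5.
Variable R : realType.
Local Notation C := R[i].
Variable n : nat.
Implicit Types x y z : 'cV[C]_n.

Definition qset (M : 'M[C]_n) (q : C) : set R :=
  [set r : R | exists x y : 'cV[C]_n,
        [/\ vnorm x = 1, vnorm y = 1, cinner x y = q &
             r = cabs (cinner (M *m x) y)]].

Definition opset (M : 'M[C]_n) : set R :=
  [set vnorm (M *m x) | x in [set x : 'cV[C]_n | vnorm x = 1]].

Lemma qn_ub (M : 'M[C]_n) q : has_ubound (qset M q).
Proof.
exists (Kb M) => r [x [y [hx hy hq ->]]].
exact: le_trans (cabs_le_vnorm _ _ hy) (Mbound _ _ hx).
Qed.

Lemma qn_le (M : 'M[C]_n) q r x y : vnorm x = 1 -> vnorm y = 1 -> cinner x y = q ->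
  r <= cabs (cinner (M *m x) y) -> r <= qnumrad q M.
Proof.
move=> hx hy hq h; apply: le_trans h _.
by apply: (ub_le_sup (qn_ub M q)); exists x, y.
Qed.

Lemma qn_ge0 (M : 'M[C]_n) q : 0 <= qnumrad q M.
Proof.
apply: (sup_ge0' (qset M q)); last exact: qn_ub.
by move=> r [x [y [_ _ _ ->]]]; apply: cabs_ge0.
Qed.

Lemma op_ub (M : 'M[C]_n) : has_ubound (opset M).
Proof. by exists (Kb M) => r [x hx <-]; apply: Mbound. Qed.

Lemma op_le (M : 'M[C]_n) x : vnorm x = 1 -> vnorm (M *m x) <= opnorm M.
Proof. by move=> hx; apply: (ub_le_sup (op_ub M)); exists x. Qed.

Lemma op_ge0 (M : 'M[C]_n) : 0 <= opnorm M.
Proof.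
apply: (sup_ge0' (opset M)); last exact: op_ub.
by move=> r [x _ <-]; apply: vnorm_ge0.
Qed.

End Part5.
Arguments qset {R n}. Arguments opset {R n}. Arguments qn_ub {R n}. Arguments qn_le {R n}.
Arguments qn_ge0 {R n}. Arguments op_ub {R n}. Arguments op_le {R n}. Arguments op_ge0 {R n}.

Theorem mainTheorem5 (R : realType) (n : nat) (alpha : R) (A : 'M[R[i]]_n)
    (q : R[i]) :
  (2 <= n)%N -> 0 <= alpha -> alpha < pi / 2 -> sectorial alpha A ->
  0 < cabs q -> cabs q <= 1 ->
  cos alpha * qnumrad q A <= opnorm (realpart A) /\
  cabs q * cos alpha * qnumrad q A <= qnumrad q (realpart A).
Proof.
move=> n2 a0 a1 hA q0 q1.
have pi2 : 0 < pi / 2 :> R by rewrite divr_gt0 // pi_gt0.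
have c0 : 0 < cos alpha.
  by apply: cos_gt0_pihalf; rewrite a1 andbT; apply: (lt_le_trans _ a0); rewrite oppr_lt0.
have hs := sect_all alpha A hA.
change (cos alpha * sup (qset A q) <= opnorm (realpart A) /\
  cabs q * cos alpha * sup (qset A q) <= qnumrad q (realpart A)).
have [E0|ne] := eqVneq (qset A q) set0.
  rewrite E0 sup0 !mulr0; split; [exact: op_ge0 | exact: qn_ge0].
have ne' := iffLR (set0P _) ne.
split.
  apply: (sup_scale _ _ _ c0 ne') => r [x [y [hx hy hq ->]]].
  have cb := cos_bound alpha A x y a0 a1 hA.
  have Hle : forall z, vnorm z = 1 -> Re (Bf A z z) <= opnorm (realpart A).
    move=> z hz; have G := realpart_link A z z; rewrite hf_diag in G.
    have -> : Re (Bf A z z) = Re (cinner (realpart A *m z) z) by rewrite G.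
    apply: le_trans (Re_le_cabs _) _.
    apply: le_trans (cabs_le_vnorm _ _ hz) _.
    exact: op_le.
  apply: sqr_le_nonneg; first by apply: mulr_ge0; [exact: (ltW c0) | exact: cabs_ge0].
    exact: op_ge0.
  apply: le_trans cb _; rewrite expr2; apply: ler_pM; first exact: (hs x).1.
  - exact: (hs y).1.
  - exact: Hle.
  - exact: Hle.
apply: sup_scale; first by rewrite mulr_gt0.
  exact: ne'.
move=> r [x [y [hx hy hq ->]]].
have [x' [y' [hx' hy' hq' h]]] := pair_b alpha A q x y a0 a1 hA hx hy hq.
exact: qn_le hx' hy' hq' h.
Qed.
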